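(* Let $X$ be a real topological vector space, let $C$ be a non-empty subset of $X$, and let $f:X\times X\to\mathbb{R}$ be a bifunction. Then $f$ is cyclically quasi-monotone on $C$ if and only if for every finite non-empty subset $A$ of $C$ there exists $x\in A$ such that \[ \max_{a\in A} f(a,x)\leq 0. \]
   Context: A bifunction $f:X\times X\to\mathbb{R}$ is called cyclically quasi-monotone on $C$ if for every $n\in\mathbb{N}$ and all $x_0,x_1,\dots,x_n\in C$ there exists $i\in\{0,1,\dots,n\}$ such that $f(x_i,x_{i+1})\leq 0$, where $x_{n+1}:=x_0$. *)

(* Defs.v *)
From HB Require Import structures.
From mathcomp Require Import all_boot all_order all_algebra.
From mathcomp Require Import boolp classical_sets cardinality reals.
From mathcomp Require Import Rstruct tvs.
Set Implicit Arguments. Unset Strict Implicit. Unset Printing Implicit Defensive.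
Import Order.TTheory GRing.Theory Num.Theory.
Local Open Scope classical_set_scope.
Local Open Scope ring_scope.

Definition cyclically_quasi_monotone (R : numDomainType) (X : Type)
    (f : X -> X -> R) (C : set X) : Prop :=
  forall (n : nat) (x : nat -> X),
    (forall i, (i <= n)%N -> C (x i)) ->
    exists i, (i <= n)%N /\ f (x i) (if i == n then x 0%N else x i.+1) <= 0.

(* Main.v *)
Require Import Defs.
From HB Require Import structures.
From mathcomp Require Import all_boot all_order all_algebra.
From mathcomp Require Import boolp classical_sets cardinality reals.
From mathcomp Require Import Rstruct tvs.
From mathcomp Require Import zify.
Import Order.TTheory GRing.Theory Num.Theory.
Local Open Scope classical_set_scope.
Local Open Scope ring_scope.

Theorem proposition2p1 (X : tvsType Rdefinitions.R) (C : set X)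
    (f : X -> X -> Rdefinitions.R) :
  C !=set0 ->
  (cyclically_quasi_monotone f C <->
   forall A : set X, finite_set A -> A !=set0 -> A `<=` C ->
     exists2 x, A x & forall a, A a -> f a x <= 0).
Proof.
move=> [c0 Cc0]; split.
- move=> Hcq A finA [a0 Aa0] AC; apply: contrapT => Hno.
  have Hg : forall x, exists a, A x -> A a /\ 0 < f a x.
    move=> x; case: (pselect (A x)) => Ax; last by exists a0.
    have : ~ (forall a, A a -> f a x <= 0) by move=> H; apply: Hno; exists x.
    move=> /existsNP [a] /not_implyP [Aa] Hn.
    by exists a => _; split => //; rewrite ltNge; apply/negP.
  case: (choice Hg) => g Hgx.
  pose y := fun k => iter k g a0.
  have Ay : forall k, A (y k) by elim => //= k IH; case: (Hgx _ IH).
  have Py : forall k, 0 < f (y k.+1) (y k) by move=> k; case: (Hgx _ (Ay k)).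
  case/finite_seqP: finA => s sE.
  have : ~~ uniq (mkseq y (size s).+1).
    apply/negP => U.
    have := uniq_leq_size U.
    have sub : {subset mkseq y (size s).+1 <= s}.
      by move=> z /mapP [k _ ->]; have := Ay k; rewrite sE.
    by move/(_ s sub); rewrite size_mkseq ltnn.
  case/(uniqPn a0) => p [q [pq qs E]].
  rewrite size_mkseq in qs.
  rewrite !nth_mkseq ?(ltn_trans pq) // in E.
  have [i [ilt]] := Hcq (q-p).-1 (fun i => y (q - i)%N) (fun i _ => AC _ (Ay _)).
  case: eqP => [->|ne].
  + have -> : (q - (q - p).-1 = p.+1)%N by lia.
    by rewrite subn0 -E leNgt Py.
  + have -> : (q - i = (q - i.+1).+1)%N by lia.
    by rewrite leNgt Py.
- move=> H n x Cx.
  have ne : x @` `I_n.+1 !=set0 by exists (x 0%N); exists 0%N.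
  have sub : x @` `I_n.+1 `<=` C by move=> _ [k kn <-]; apply: Cx.
  have [z [j jn <-] Hz] := H _ (finite_image _ (finite_II n.+1)) ne sub.
  case: j jn Hz => [|j] jn Hz.
  + exists n; split => //; rewrite eqxx; apply: Hz; by exists n => //=.
  + have jn' : (j.+1 < n.+1)%N := jn.
    exists j; split; first by lia.
    have -> : (j == n) = false by apply/eqP; lia.
    by apply: Hz; exists j => //; apply: ltnW.
Qed.
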